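(* Let $\mathscr{H}$ be a complex Hilbert space, $N(\cdot)$ a norm on $\mathbb{B}(\mathscr{H})$, and $B,C\in\mathbb{B}(\mathscr{H})$ self-adjoint. Then $$\frac{1}{\sqrt2}\max\{N(B+C),N(B-C)\}\leq w_{(N,e)}(B,C)\leq\frac{1}{\sqrt2}\sqrt{N^2(B+C)+N^2(B-C)}.$$
   Context: For $T\in\mathbb{B}(\mathscr{H})$, $\Re(T)=\frac12(T+T^* )$. For $B,C\in\mathbb{B}(\mathscr{H})$, $w_{(N,e)}(B,C)=\sup_{\lambda_1,\lambda_2\in\mathbb{C},\ |\lambda_1|^2+|\lambda_2|^2\leq 1}\sup_{\theta\in\mathbb{R}} N(\Re(e^{i\theta}(\lambda_1B+\lambda_2C)))$. *)

(* Defs.v *)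
From HB Require Import structures.
From mathcomp Require Import all_boot all_order all_algebra.
From mathcomp Require Import complex.
From mathcomp Require Import all_classical all_reals.
From mathcomp Require Import trigo.
From Stdlib Require Import ClassicalEpsilon.
Set Implicit Arguments. Unset Strict Implicit. Unset Printing Implicit Defensive.
Import Order.TTheory GRing.Theory Num.Theory.
Local Open Scope ring_scope.
Local Open Scope complex_scope.

Section Hilbert.
Variable R : realType.
Local Notation C := R[i].

Definition cabs (a : C) : R := Num.sqrt (complex.Re a ^+ 2 + complex.Im a ^+ 2).

Definition expi (t : R) : C := cos t +i* sin t.

Variable H : lmodType C.
Variable ip : H -> H -> C.

Definition is_inner_product : Prop :=
  [/\ forall (a : C) (x y z : H), ip (a *: x + y) z = a * ip x z + ip y z,
      forall x y : H, ip y x = (ip x y)^*,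
      forall x : H, 0 <= ip x x &
      forall x : H, ip x x = 0 -> x = 0].

Definition hnorm (x : H) : R := Num.sqrt (complex.Re (ip x x)).

Definition hcomplete : Prop :=
  forall u : nat -> H,
    (forall e : R, 0 < e -> exists M : nat, forall m n : nat,
        (M <= m)%N -> (M <= n)%N -> hnorm (u m - u n) < e) ->
    exists l : H, forall e : R, 0 < e -> exists M : nat, forall n : nat,
        (M <= n)%N -> hnorm (u n - l) < e.

Definition is_hilbert : Prop := is_inner_product /\ hcomplete.

Definition bounded_op (T : H -> H) : Prop :=
  (forall (a : C) (x y : H), T (a *: x + y) = a *: T x + T y) /\
  exists M : R, forall x : H, hnorm (T x) <= M * hnorm x.

Definition is_adjoint (T S : H -> H) : Prop :=
  bounded_op S /\ forall x y : H, ip (T x) y = ip x (S y).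

(* the adjoint T^* (chosen; unique on a Hilbert space) *)
Definition adj (T : H -> H) : H -> H :=
  epsilon (inhabits (fun x : H => x)) (is_adjoint T).

Definition selfadjoint (T : H -> H) : Prop := adj T = T.

Definition ReOp (T : H -> H) : H -> H :=
  fun x => (2%:R)^-1 *: (T x + adj T x).

Definition is_norm_on_BH (N : (H -> H) -> R) : Prop :=
  [/\ forall T, bounded_op T -> 0 <= N T,
      forall T, bounded_op T -> N T = 0 -> T = (fun _ => 0),
      forall (a : C) T, bounded_op T -> N (fun x => a *: T x) = cabs a * N T &
      forall T S, bounded_op T -> bounded_op S ->
        N (fun x => T x + S x) <= N T + N S].

Definition wNe (N : (H -> H) -> R) (B Cop : H -> H) : R :=
  sup [set r : R | exists (l1 l2 : C) (t : R),
        cabs l1 ^+ 2 + cabs l2 ^+ 2 <= 1 /\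
        r = N (ReOp (fun x => expi t *: (l1 *: B x + l2 *: Cop x)))].

End Hilbert.

(* Main.v *)
Require Import Defs.
From HB Require Import structures.
From mathcomp Require Import all_boot all_order all_algebra.
From mathcomp Require Import complex.
From mathcomp Require Import all_classical all_reals trigo.
From Stdlib Require Import ClassicalEpsilon.
From mathcomp Require Import ring lra.
Import Order.TTheory GRing.Theory Num.Theory.
Local Open Scope ring_scope.
Local Open Scope complex_scope.
Set Implicit Arguments. Unset Strict Implicit. Unset Printing Implicit Defensive.


Lemma small_inv {R : realType} (e : R) : 0 < e -> exists K : nat, forall n, (K <= n)%N -> (n.+1%:R)^-1 < e.
Proof.
move=> e0; exists (Num.Def.archi_bound e^-1) => n hn.
rewrite invf_plt ?posrE ?ltr0Sn //.
have ei : 0 <= e^-1 by rewrite invr_ge0 ltW.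
have hb := @archi_boundP R e^-1 ei.
apply: (lt_le_trans hb).
by rewrite ler_nat ltnW // ltnS.
Qed.

Lemma lem_eps {R : realType} (a b c : R) : 0 <= c -> (forall e, 0 < e -> e <= 1 -> a <= b + e * c) -> a <= b.
Proof.
move=> c0 h; apply/ler_addgt0Pr => e e0.
pose g := Num.min 1 (e / (c + 1)).
have c1 : 0 < c + 1 by rewrite ltr_wpDl.
have g0 : 0 < g by rewrite lt_min ltr01 divr_gt0.
have g1 : g <= 1 by rewrite ge_min lexx.
have g2 : g <= e / (c + 1) by rewrite ge_min lexx orbT.
apply: (le_trans (h g g0 g1)); rewrite lerD2l.
move: g2; rewrite ler_pdivlMr // => g2.
by apply: le_trans g2; rewrite ler_wpM2l ?(ltW g0) // lerDl.
Qed.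

Lemma lem_lt_all {R : realType} (a : R) : (forall e, 0 < e -> a < e) -> a <= 0.
Proof. by move=> h; case: (lerP a 0) => // ha; have := h a ha; rewrite ltxx. Qed.

Lemma cabs2 {R : realType} (a : R[i]) : cabs a ^+ 2 = complex.Re a ^+ 2 + complex.Im a ^+ 2.
Proof. by rewrite /cabs sqr_sqrtr // addr_ge0 // sqr_ge0. Qed.
Lemma cabs_ge0 {R : realType} (a : R[i]) : 0 <= cabs a.
Proof. exact: sqrtr_ge0. Qed.

Lemma cabsR {R : realType} (r : R) : cabs r%:C = `|r|.
Proof. by rewrite /cabs /= expr0n /= addr0 sqrtr_sqr. Qed.

Lemma cabs_le0 {R : realType} (c : R[i]) : cabs c <= 0 -> c = 0.
Proof.
move=> h; have h0 : cabs c = 0 by apply/eqP; rewrite eq_le h cabs_ge0.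
have := cabs2 c; rewrite h0 expr0n /=; case: c {h h0} => a b /= e.
have ha : a = 0 by nra.
have hb : b = 0 by nra.
by rewrite ha hb.
Qed.

Section HB.
Variable R : realType.
Variable H : lmodType R[i].
Variable ip : H -> H -> R[i].
Hypothesis hip : is_inner_product ip.

Definition q (x : H) : R := complex.Re (ip x x).

Lemma ipDZl a x y z : ip (a *: x + y) z = a * ip x z + ip y z.
Proof. by case: hip. Qed.
Lemma ipC x y : ip y x = (ip x y)^*.
Proof. by case: hip. Qed.
Lemma ip0l z : ip 0 z = 0.
Proof.
have := ipDZl 1 0 0 z; rewrite scale1r addr0 mul1r => h.
by apply: (@addrI _ (ip 0 z)); rewrite addr0 -h.
Qed.
Lemma ipDl x y z : ip (x + y) z = ip x z + ip y z.
Proof. by rewrite -[x]scale1r ipDZl mul1r scale1r. Qed.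
Lemma ipZl a x z : ip (a *: x) z = a * ip x z.
Proof. by rewrite -[a *: x]addr0 ipDZl ip0l addr0. Qed.
Lemma ipNl x z : ip (- x) z = - ip x z.
Proof. by rewrite -scaleN1r ipZl mulN1r. Qed.
Lemma ipBl x y z : ip (x - y) z = ip x z - ip y z.
Proof. by rewrite ipDl ipNl. Qed.
Lemma ipDr x y z : ip x (y + z) = ip x y + ip x z.
Proof. by rewrite ipC ipDl rmorphD /= -!ipC. Qed.
Lemma ipZr a x y : ip x (a *: y) = a^* * ip x y.
Proof. by rewrite ipC ipZl rmorphM /= -ipC. Qed.
Lemma ip0r x : ip x 0 = 0.
Proof. by rewrite ipC ip0l conjc0. Qed.
Lemma ipNr x z : ip x (- z) = - ip x z.
Proof. by rewrite -scaleN1r ipZr rmorphN1 mulN1r. Qed.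
Lemma ipBr x y z : ip x (y - z) = ip x y - ip x z.
Proof. by rewrite ipDr ipNr. Qed.

Lemma ipxx x : ip x x = (q x)%:C.
Proof.
have : 0 <= ip x x by case: hip.
rewrite /q; case: (ip x x) => a b /ger0_Im /= ->. by [].
Qed.
Lemma q_ge0 x : 0 <= q x.
Proof. have : 0 <= ip x x by case: hip. by rewrite ipxx lecR. Qed.
Lemma q_eq0 x : q x = 0 -> x = 0.
Proof. by move=> h; case: hip => _ _ _ h4; apply: h4; rewrite ipxx h. Qed.

Lemma q_expand x y t : q (x + t *: y) = q x + 2 * (complex.Re t * complex.Re (ip x y) + complex.Im t * complex.Im (ip x y))
   + (complex.Re t ^+ 2 + complex.Im t ^+ 2) * q y.
Proof.
rewrite {1}/q ipDl !ipDr !ipZl !ipZr (ipC x y) !ipxx.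
move: (ip x y) (q x) (q y) => c a b.
case: t => t1 t2; case: c => c1 c2 /=. simpc; ring.
Qed.
Lemma hnorm_q x : hnorm ip x = Num.sqrt (q x).
Proof. by []. Qed.
Lemma hnorm_ge0 x : 0 <= hnorm ip x.
Proof. exact: sqrtr_ge0. Qed.
Lemma hnorm2 x : hnorm ip x ^+ 2 = q x.
Proof. by rewrite hnorm_q sqr_sqrtr // q_ge0. Qed.
Lemma q0 : q 0 = 0.
Proof. by rewrite /q ip0l. Qed.

Lemma q_scale a y : q (a *: y) = (complex.Re a ^+ 2 + complex.Im a ^+ 2) * q y.
Proof. by rewrite -[a *: y]add0r q_expand q0 ip0l /=; ring. Qed.


Lemma hnorm_scale a y : hnorm ip (a *: y) = cabs a * hnorm ip y.
Proof. by rewrite hnorm_q q_scale sqrtrM // addr_ge0 // sqr_ge0. Qed.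

Lemma hnormN x : hnorm ip (- x) = hnorm ip x.
Proof.
rewrite -scaleN1r hnorm_scale /cabs /= oppr0 expr0n /= addr0 sqrtr_sqr normrN normr1 mul1r //.
Qed.

Lemma CS x y : complex.Re (ip x y) ^+ 2 + complex.Im (ip x y) ^+ 2 <= q x * q y.
Proof.
have [qy0|qyn0] := eqVneq (q y) 0.
  by rewrite (q_eq0 qy0) ip0r /= q0 mulr0 expr0n /= addr0.
have qyp : 0 < q y by rewrite lt0r qyn0 q_ge0.
set c1 := complex.Re (ip x y); set c2 := complex.Im (ip x y).
have := q_ge0 (x + ((- (c1 / q y)) +i* (- (c2 / q y))) *: y).
rewrite q_expand /= -/c1 -/c2.
have e1 : (- (c1 / q y)) * q y = - c1 by field; rewrite gt_eqF.
have e2 : (- (c2 / q y)) * q y = - c2 by field; rewrite gt_eqF.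
move: e1 e2; move: (- (c1 / q y)) (- (c2 / q y)) => t1 t2 e1 e2 h.
have h' := mulr_ge0 (ltW qyp) h.
nra.
Qed.

Lemma CS2 x y : cabs (ip x y) <= hnorm ip x * hnorm ip y.
Proof. by rewrite /cabs !hnorm_q -sqrtrM ?q_ge0 // ler_sqrt ?mulr_ge0 ?q_ge0 // CS. Qed.

Lemma Re_le_cabs (c : R[i]) : complex.Re c <= cabs c.
Proof.
apply: (le_trans (ler_norm _)); rewrite -sqrtr_sqr /cabs ler_sqrt.
  by rewrite lerDl sqr_ge0.
by rewrite addr_ge0 // sqr_ge0.
Qed.

Lemma q_add x y : q (x + y) = q x + 2 * complex.Re (ip x y) + q y.
Proof. by rewrite -[y in x + y]scale1r q_expand /=; ring. Qed.

Lemma hnorm_triangle x y : hnorm ip (x + y) <= hnorm ip x + hnorm ip y.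
Proof.
rewrite [hnorm ip (x + y)]hnorm_q -[hnorm ip x + hnorm ip y]ger0_norm ?addr_ge0 ?hnorm_ge0 //.
rewrite -sqrtr_sqr ler_sqrt ?sqr_ge0 // q_add.
have h1 := le_trans (Re_le_cabs (ip x y)) (CS2 x y).
rewrite -!hnorm2; nra.
Qed.

Lemma ip_ext u v : (forall x, ip x u = ip x v) -> u = v.
Proof.
move=> h; apply/eqP; rewrite -subr_eq0; apply/eqP; apply: q_eq0.
by rewrite /q ipBr h subrr.
Qed.

Hypothesis hcomp : hcomplete ip.

Lemma riesz (f : H -> R[i]) (flin : forall a x y, f (a *: x + y) = a * f x + f y)
  (M : R) (fb : forall x, cabs (f x) <= M * hnorm ip x) :
  exists z, forall x, f x = ip x z.
Proof.
have f0 : f 0 = 0.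
  have := flin 1 0 0; rewrite scale1r addr0 mul1r => h.
  by apply: (@addrI _ (f 0)); rewrite addr0 -h.
have fZ a x : f (a *: x) = a * f x by rewrite -[a *: x]addr0 flin f0 addr0.
have fD x y : f (x + y) = f x + f y by rewrite -[x]scale1r flin mul1r scale1r.
have fB x y : f (x - y) = f x - f y by rewrite fD -scaleN1r fZ mulN1r.
case: (pselect (exists x, f x != 0)) => [[x1 hx1]|hno]; last first.
  exists 0 => x; rewrite ip0r; apply/eqP; apply/negPn/negP => hx; apply: hno; by exists x.
pose e1 := (f x1)^-1 *: x1.
have fe1 : f e1 = 1 by rewrite fZ mulVf.
pose S : set R := fun r => exists y, f y = 1 /\ r = q y.
have lbS : lbound S 0 by move=> r [y [_ ->]]; exact: q_ge0.
have S0 : (S !=set0)%classic by exists (q e1), e1.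
have hinf : has_inf S by split => //; exists 0.
pose d := inf S.
have d_lb y : f y = 1 -> d <= q y.
  by move=> hy; apply: ge_inf; [exists 0 | exists y].
have d0 : 0 <= d := lb_le_inf S0 lbS.
have hu : forall n : nat, exists y, f y = 1 /\ q y < d + (n.+1%:R)^-1.
  move=> n; have hp : 0 < (n.+1%:R : R)^-1 by rewrite invr_gt0 ltr0Sn.
  have [r [y [fy ->]] hr] := inf_adherent hp hinf.
  by exists y.
have [u hu'] := boolp.choice hu.
have cb n m : q (u n - u m) <= 2 * (n.+1%:R)^-1 + 2 * (m.+1%:R)^-1.
  have par : q (u n - u m) = 2 * q (u n) + 2 * q (u m) - q (u n + u m).
    rewrite !q_add ipNr -scaleN1r q_scale /=.
    by move: (ip (u n) (u m)) => c; case: c => c1 c2 /=; ring.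
  have hmid : 4 * d <= q (u n + u m).
    have := d_lb ((2^-1)%:C *: (u n + u m)).
    rewrite fZ fD (hu' n).1 (hu' m).1 q_scale /= expr0n /= addr0.
    have -> : (2^-1)%:C * (1 + 1) = 1 :> R[i].
      by apply/eqP; rewrite eq_complex /=; apply/andP; split; apply/eqP; field.
    move=> /(_ erefl) h. 
    have -> : 4 * d = 4 * d + 0 by rewrite addr0.
    nra.
  have := (hu' n).2; have := (hu' m).2.
  move: (n.+1%:R^-1 : R) (m.+1%:R^-1 : R) => a b. rewrite par. lra.
have hC : forall e : R, 0 < e -> exists M0 : nat, forall m n : nat,
        (M0 <= m)%N -> (M0 <= n)%N -> hnorm ip (u m - u n) < e.
  move=> e e0.
  have e40 : 0 < e ^+ 2 / 4 by rewrite divr_gt0 // exprn_gt0.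
  have [K hK] := small_inv e40.
  exists K => m n hm hn.
  rewrite hnorm_q -(ger0_norm (ltW e0)) -sqrtr_sqr ltr_sqrt ?exprn_gt0 ?normr_gt0 ?gt_eqF //.
  apply: (le_lt_trans (cb m n)).
  have := hK m hm; have := hK n hn.
  move: (m.+1%:R^-1 : R) (n.+1%:R^-1 : R) => a b; lra.
have [l hl] := hcomp hC.
pose M' := `|M| + 1.
have M'0 : 0 < M' by rewrite ltr_wpDl.
have fb' x : cabs (f x) <= M' * hnorm ip x.
  apply: (le_trans (fb x)); rewrite ler_wpM2r ?hnorm_ge0 //.
  by apply: (le_trans (ler_norm M)); rewrite lerDl.
have fl : f l = 1.
  have : cabs (1 - f l) <= 0.
    apply: lem_lt_all => e e0.
    have [N hN] := hl (e / M') (divr_gt0 e0 M'0).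
    have h1 := hN N (leqnn N).
    have := fb' (u N - l); rewrite fB (hu' N).1 => h2.
    apply: (le_lt_trans h2).
    by rewrite mulrC -ltr_pdivlMr.
  move/cabs_le0 => /eqP; rewrite subr_eq0 => /eqP <-. by [].
have qld : q l <= d.
  apply: (@lem_eps _ _ _ (2 * d + 6)); first by lra.
  move=> eps eps0 eps1.
  have [N1 hN1] := hl eps eps0.
  have [K hK] := small_inv eps0.
  pose n := maxn N1 K.
  have h1 := hN1 n (leq_maxl _ _).
  have h2 := hK n (leq_maxr _ _).
  have [_ h3] := hu' n.
  have tri : hnorm ip l <= hnorm ip (u n) + hnorm ip (u n - l).
    have el : u n + (- (u n - l)) = l by rewrite opprB addrC subrK.
    by have := hnorm_triangle (u n) (- (u n - l)); rewrite el hnormN.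
  have e2 := hnorm2 (u n); have e3 := hnorm2 l.
  have g1 := hnorm_ge0 (u n); have g2 := hnorm_ge0 (u n - l); have g3 := hnorm_ge0 l.
  move: h2 h3; move: (n.+1%:R^-1 : R) => a h2 h3.
  have hb : hnorm ip (u n) <= d + 2 by nra.
  rewrite -e3.
  have : hnorm ip l ^+ 2 <= (hnorm ip (u n) + hnorm ip (u n - l)) ^+ 2.
    by rewrite ler_pXn2r // ?nnegrE ?addr_ge0.
  nra.
have orth k : f k = 0 -> ip l k = 0.
  move=> fk.
  pose s := (q k + 1)^-1.
  have qk0 := q_ge0 k.
  have s0 : 0 < s by rewrite invr_gt0; lra.
  have sq : s * q k < 1.
    by rewrite /s mulrC ltr_pdivrMr ?mul1r; lra.
  set c := ip l k.
  have := d_lb (l + ((- (s * complex.Re c)) +i* (- (s * complex.Im c))) *: k).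
  rewrite fD fZ fk mulr0 addr0 => /(_ fl).
  rewrite q_expand -/c /=.
  case: c => c1 c2 /= h.
  have hX : c1 ^+ 2 + c2 ^+ 2 <= 0.
    have h4 : 0 <= s * ((c1 ^+ 2 + c2 ^+ 2) * (s * q k - 2)) by nra.
    rewrite pmulr_rge0 // in h4.
    nra.
  have -> : c1 = 0 by nra.
  have -> : c2 = 0 by nra.
  by [].
have ql0 : 0 < q l.
  rewrite lt0r q_ge0 andbT; apply/negP => /eqP /q_eq0 l0.
  by move: fl; rewrite l0 f0 => /eqP; rewrite eq_sym oner_eq0.
exists (((q l)^-1)%:C *: l) => x.
have kx : f (x - f x *: l) = 0 by rewrite fB fZ fl mulr1 subrr.
rewrite ipZr.
have := orth _ kx; rewrite ipC ipBl ipZl ipxx => /eqP.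
rewrite conjc_eq0 subr_eq0 => /eqP ->.
have r0 : q l != 0 by rewrite gt_eqF.
move: (q l) r0 (f x) => r r0 [a b].
apply/eqP; rewrite eq_complex /=; apply/andP; split; apply/eqP; field => //.
Qed.

Lemma adj_exists T : bounded_op ip T -> exists S, is_adjoint ip T S.
Proof.
case=> Tlin [M hM].
have hy : forall y, exists z, forall x, ip (T x) y = ip x z.
  move=> y; apply: (@riesz (fun x => ip (T x) y) _ (M * hnorm ip y)).
    by move=> a x x'; rewrite Tlin ipDZl.
  move=> x; apply: (le_trans (CS2 _ _)).
  by rewrite mulrAC ler_wpM2r ?hnorm_ge0.
have [S hS] := boolp.choice hy.
exists S; split => //; split.
  move=> a y y'; apply: ip_ext => x.
  by rewrite ipDr ipZr -!hS ipDr ipZr.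
exists `|M| => y.
have := CS2 (T (S y)) y; rewrite hS ipxx cabsR ger0_norm ?q_ge0 // -hnorm2.
have := hM (S y); have := hnorm_ge0 (S y); have := hnorm_ge0 y; have := hnorm_ge0 (T (S y)).
have := ler_norm M; have := normr_ge0 M.
move: (hnorm ip (S y)) (hnorm ip y) (hnorm ip (T (S y))) `|M| => a b c m.
move=> m0 Mm c0 b0 a0 ca h.
have h3 : a * a <= a * (m * b).
  have h1 : c * b <= M * a * b by rewrite ler_wpM2r.
  have h2 : M * a * b <= m * a * b by rewrite ler_wpM2r ?mulr_ge0 // ler_wpM2r.
  rewrite -expr2 mulrCA mulrA; exact: (le_trans h (le_trans h1 h2)).
case: (eqVneq a 0) => [->|an0]; first by rewrite mulr_ge0.
by rewrite ler_pM2l ?lt0r ?an0 in h3.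
Qed.

Lemma adj_spec T : bounded_op ip T -> is_adjoint ip T (adj ip T).
Proof. by move=> hT; rewrite /adj; apply: epsilon_spec; exact: adj_exists. Qed.

Lemma adj_unique T S : is_adjoint ip T S -> adj ip T = S.
Proof.
move=> hS.
have hA : is_adjoint ip T (adj ip T) by rewrite /adj; apply: epsilon_spec; exists S.
apply: boolp.funext => y; apply: ip_ext => x.
by rewrite -hA.2 -hS.2.
Qed.

Lemma bounded_comb a b T S : bounded_op ip T -> bounded_op ip S ->
  bounded_op ip (fun x => a *: T x + b *: S x).
Proof.
move=> [Tl [MT hT]] [Sl [MS hS]]; split.
  move=> c x y; rewrite Tl Sl !scalerDr !scalerA [a * c]mulrC [b * c]mulrC -!scalerA.
  by rewrite addrACA.
exists (cabs a * MT + cabs b * MS) => x.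
apply: (le_trans (hnorm_triangle _ _)); rewrite !hnorm_scale mulrDl -!mulrA.
by rewrite lerD // ler_wpM2l ?cabs_ge0.
Qed.
End HB.

Lemma key_ineq {R : realType} (a b P Q : R) : a ^+ 2 + b ^+ 2 <= 1 -> 0 <= P -> 0 <= Q ->
  `|a + b| / 2 * P + `|a - b| / 2 * Q <= (Num.sqrt 2)^-1 * Num.sqrt (P ^+ 2 + Q ^+ 2).
Proof.
move=> hab P0 Q0.
rewrite -sqrtrV // -sqrtrM ?invr_ge0 //.
have L0 : 0 <= `|a + b| / 2 * P + `|a - b| / 2 * Q.
  by rewrite addr_ge0 // mulr_ge0 // divr_ge0.
rewrite -(ger0_norm L0) -sqrtr_sqr ler_sqrt; last first.
  by rewrite mulr_ge0 ?invr_ge0 // addr_ge0 // sqr_ge0.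
have hu : `|a + b| ^+ 2 = (a + b) ^+ 2 by rewrite real_normK ?num_real.
have hv : `|a - b| ^+ 2 = (a - b) ^+ 2 by rewrite real_normK ?num_real.
move: hu hv; move: `|a + b| `|a - b| => u v hu hv.
have h0 : 0 <= (u * Q - v * P) ^+ 2 by rewrite sqr_ge0.
nra.
Qed.


Section Main.
Variable R : realType.
Variable H : lmodType R[i].
Variable ip : H -> H -> R[i].
Hypothesis hip : is_inner_product ip.
Hypothesis hcomp : hcomplete ip.
Variable N : (H -> H) -> R.
Hypothesis hN : is_norm_on_BH ip N.
Variables B Cop : H -> H.
Hypothesis hB : bounded_op ip B.
Hypothesis hC : bounded_op ip Cop.
Hypothesis sB : selfadjoint ip B.
Hypothesis sC : selfadjoint ip Cop.

Lemma ipB x y : ip (B x) y = ip x (B y).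
Proof. have := adj_spec hip hcomp hB; rewrite sB; case=> _; exact. Qed.
Lemma ipCo x y : ip (Cop x) y = ip x (Cop y).
Proof. have := adj_spec hip hcomp hC; rewrite sC; case=> _; exact. Qed.

Lemma adj_comb a b : adj ip (fun x => a *: B x + b *: Cop x) = (fun x => a^* *: B x + b^* *: Cop x).
Proof.
apply: (adj_unique hip); split; first exact: bounded_comb.
move=> x y.
rewrite (ipDl hip) !(ipZl hip) (ipDr hip) !(ipZr hip) ipB ipCo.
by rewrite !conjCK.
Qed.

Lemma ReOp_form l1 l2 t :
  ReOp ip (fun x => expi t *: (l1 *: B x + l2 *: Cop x)) =
  (fun x => (complex.Re (expi t * l1))%:C *: B x + (complex.Re (expi t * l2))%:C *: Cop x).
Proof.
have -> : (fun x => expi t *: (l1 *: B x + l2 *: Cop x)) =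
          (fun x => (expi t * l1) *: B x + (expi t * l2) *: Cop x).
  by apply: boolp.funext => x; rewrite scalerDr !scalerA.
rewrite /ReOp adj_comb; apply: boolp.funext => x.
rewrite !ReJ_add.
move: (expi t * l1) (expi t * l2) => a b.
rewrite addrACA -!scalerDl scalerDr !scalerA.
by rewrite [_^-1 * _]mulrC [_^-1 * (b + _)]mulrC.
Qed.


Lemma bnd_scale a T : bounded_op ip T -> bounded_op ip (fun x => a *: T x).
Proof.
move=> hT; have := bounded_comb hip a 0 hT hT.
have -> : (fun x => a *: T x + 0 *: T x) = (fun x => a *: T x).
  by apply: boolp.funext => x; rewrite scale0r addr0.
by [].
Qed.

Lemma bnd_BpC : bounded_op ip (fun x => B x + Cop x).
Proof.
have := bounded_comb hip 1 1 hB hC.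
have -> : (fun x => 1 *: B x + 1 *: Cop x) = (fun x => B x + Cop x).
  by apply: boolp.funext => x; rewrite !scale1r.
by [].
Qed.

Lemma bnd_BmC : bounded_op ip (fun x => B x - Cop x).
Proof.
have := bounded_comb hip 1 (-1) hB hC.
have -> : (fun x => 1 *: B x + (-1) *: Cop x) = (fun x => B x - Cop x).
  by apply: boolp.funext => x; rewrite scale1r scaleN1r.
by [].
Qed.

Let P := N (fun x => B x + Cop x).
Let Q := N (fun x => B x - Cop x).
Let UB := (Num.sqrt 2)^-1 * Num.sqrt (P ^+ 2 + Q ^+ 2).

Lemma N_real_comb (a b : R) : a ^+ 2 + b ^+ 2 <= 1 ->
  N (fun x => a%:C *: B x + b%:C *: Cop x) <= UB.
Proof.
move=> hab.
case: hN => N0 _ Nscale Ntri.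
pose al : R[i] := ((a + b) / 2)%:C.
pose be : R[i] := ((a - b) / 2)%:C.
have h1 : al + be = a%:C.
  by apply/eqP; rewrite eq_complex /=; apply/andP; split; apply/eqP; [field | rewrite addr0].
have h2 : al - be = b%:C.
  by apply/eqP; rewrite eq_complex /=; apply/andP; split; apply/eqP; [field | rewrite subr0].
have -> : (fun x => a%:C *: B x + b%:C *: Cop x) =
          (fun x => al *: (B x + Cop x) + be *: (B x - Cop x)).
  apply: boolp.funext => x.
  by rewrite scalerDr scalerBr addrACA -scalerDl -scalerBl h1 h2.
have := Ntri _ _ (bnd_scale al bnd_BpC) (bnd_scale be bnd_BmC) => /= h.
apply: (le_trans h).
rewrite (Nscale al _ bnd_BpC) (Nscale be _ bnd_BmC) !cabsR -/P -/Q.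
rewrite !normrM (ger0_norm (_ : 0 <= 2^-1)) ?invr_ge0 //.
apply: key_ineq => //.
  exact: N0 _ bnd_BpC.
exact: N0 _ bnd_BmC.
Qed.

Lemma elem_le l1 l2 t : cabs l1 ^+ 2 + cabs l2 ^+ 2 <= 1 ->
  N (ReOp ip (fun x => expi t *: (l1 *: B x + l2 *: Cop x))) <= UB.
Proof.
move=> h; rewrite ReOp_form; apply: N_real_comb.
move: h; rewrite !cabs2 /expi.
have cs := cos2Dsin2 t.
case: l1 => x1 y1; case: l2 => x2 y2 /=.
move: (cos t) (sin t) cs => c s cs h.
have e1 : (c * x1 - s * y1) ^+ 2 + (s * x1 + c * y1) ^+ 2 = (c ^+ 2 + s ^+ 2) * (x1 ^+ 2 + y1 ^+ 2) by ring.
have e2 : (c * x2 - s * y2) ^+ 2 + (s * x2 + c * y2) ^+ 2 = (c ^+ 2 + s ^+ 2) * (x2 ^+ 2 + y2 ^+ 2) by ring.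
rewrite cs mul1r in e1 e2.
have f1 := sqr_ge0 (s * x1 + c * y1).
have f2 := sqr_ge0 (s * x2 + c * y2).
nra.
Qed.

Lemma main_sec : (Num.sqrt 2)^-1 * Num.max P Q <= wNe ip N B Cop /\ wNe ip N B Cop <= UB.
Proof.
rewrite /wNe; set E := (X in sup X).
have ub : ubound E UB.
  by move=> r [l1 [l2 [t [h ->]]]]; apply: elem_le.
have hub : has_ubound E by exists UB.
pose s : R := (Num.sqrt 2)^-1.
have s0 : 0 <= s by rewrite invr_ge0 sqrtr_ge0.
have s2 : s ^+ 2 = 2^-1 by rewrite /s exprVn sqr_sqrtr.
have hs : cabs s%:C ^+ 2 + cabs s%:C ^+ 2 <= 1.
  rewrite cabs2 /= expr0n /= addr0 s2. 
  lra.
have hs' : cabs s%:C ^+ 2 + cabs (- s)%:C ^+ 2 <= 1.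
  rewrite !cabs2 /= expr0n /= !addr0 sqrrN s2; lra.
case: hN => N0 _ Nscale Ntri.
have EP : E (s * P).
  exists s%:C, s%:C, 0; split => //.
  rewrite ReOp_form /expi cos0 sin0 /=.
  rewrite !mul1r !mul0r !subr0.
  have -> : (fun x => s%:C *: B x + s%:C *: Cop x) = (fun x => s%:C *: (B x + Cop x)).
    by apply: boolp.funext => x; rewrite scalerDr.
  by rewrite (Nscale _ _ bnd_BpC) cabsR ger0_norm.
have EQ : E (s * Q).
  exists s%:C, (- s)%:C, 0; split => //.
  rewrite ReOp_form /expi cos0 sin0 /=.
  rewrite !mul1r !mul0r !subr0.
  have -> : (fun x => s%:C *: B x + (- s)%:C *: Cop x) = (fun x => s%:C *: (B x - Cop x)).
    apply: boolp.funext => x; rewrite scalerBr.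
    have -> : (- s)%:C = - (s%:C) :> R[i] by apply/eqP; rewrite eq_complex /= oppr0 !eqxx.
    by rewrite scaleNr.
  by rewrite (Nscale _ _ bnd_BmC) cabsR ger0_norm.
split.
  rewrite maxr_pMr // ge_max; apply/andP; split; exact: ub_le_sup.
by apply: ge_sup => //; exists (s * P).
Qed.

End Main.

Local Close Scope complex_scope.

Theorem corollary2p8 (R : realType) (H : lmodType R[i]) (ip : H -> H -> R[i])
  (hH : is_hilbert ip) (N : (H -> H) -> R) (hN : is_norm_on_BH ip N)
  (B Cop : H -> H) (hB : bounded_op ip B) (hC : bounded_op ip Cop)
  (sB : selfadjoint ip B) (sC : selfadjoint ip Cop) :
  let NBpC := N (fun x => B x + Cop x) in
  let NBmC := N (fun x => B x - Cop x) in
  (Num.sqrt 2)^-1 * Num.max NBpC NBmC <= wNe ip N B Cop /\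
  wNe ip N B Cop <= (Num.sqrt 2)^-1 * Num.sqrt (NBpC ^+ 2 + NBmC ^+ 2).
Proof.
move=> NBpC NBmC; case: hH => hip hcomp.
exact: (main_sec hip hcomp hN hB hC sB sC).
Qed.
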